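(* Consider a forward complete system $\dot x(t)=f(x_t,u(t))$ with delay-free output $y(t)=h_0(x(t))$ as in the context. Let $\alpha:\mathcal X^n\to\mathbb R_{\ge0}$ be continuous with $\alpha(0)=0$. Assume there exist $\beta\in\mathcal{KL}$ and $\rho,\kappa,\gamma\in\mathcal N$ such that for all $\xi\in\mathcal X^n$, $u\in\mathcal M$ and all $t\ge0$, $|y(t)|\le\max\{\beta(\alpha(\xi),\ t/(1+\rho(\|\xi\|_{\mathcal X}))),\ \kappa(\max_{\tau\in[-\theta,t]}|y(\tau)|),\ \gamma(\|u\|)\}$. Then there exists $\beta_1\in\mathcal{KL}$ such that for all $\xi,u$ and all $t\ge0$, $\|y_t\|_{\mathcal X}\le\max\{\beta_1(\tilde\alpha(\xi),\ t/(1+\rho(\|\xi\|_{\mathcal X}))),\ \kappa(\max_{\tau\in[0,t]}\|y_\tau\|_{\mathcal X}),\ \gamma(\|u\|)\}$, where $\tilde\alpha(\xi)=\max\{\alpha(\xi),H(\xi)\}$.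
   Context: Fix $\theta>0$; $\mathcal X^k=C([-\theta,0],\mathbb R^k)$ with norm $\|\xi\|_{\mathcal X}=\max_{s\in[-\theta,0]}|\xi(s)|$; for a continuous $v$ on $[-\theta,b]$, $v_t(s)=v(t+s)$. $\mathcal M$: measurable locally essentially bounded $u:\mathbb R_{\ge0}\to\mathbb R^m$, $\|u\|$ the essential supremum on $[0,\infty)$. Classes: $\mathcal N$ = continuous nondecreasing $\sigma:\mathbb R_{\ge0}\to\mathbb R_{\ge0}$, $\sigma(0)=0$; $\mathcal K$ = strictly increasing ones; $\mathcal{KL}$ = $\beta(s,t)$ of class $\mathcal K$ in $s$ and decreasing to $0$ as $t\to\infty$. $f:\mathcal X^n\times\mathbb R^m\to\mathbb R^n$ is locally Lipschitz and maps bounded sets to bounded sets; $x(\cdot,\xi,u)$ is the unique maximal solution with $x(s)=\xi(s)$ on $[-\theta,0]$; forward complete means these exist for all $t\ge0$. $h_0:\mathbb R^n\to\mathbb R^p$ is continuous with $h_0(0)=0$, and along a solution $y(\tau)=h_0(x(\tau,\xi,u))$ for $\tau\ge-\theta$ (so $y(\tau)=h_0(\xi(\tau))$ on $[-\theta,0]$); $y_t\in\mathcal X^p$ is $y_t(s)=y(t+s)$. $H(\xi)=\max_{s\in[-\theta,0]}|h_0(\xi(s))|=\|y_0\|_{\mathcal X}$. *)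

(* Defs.v *)
From HB Require Import structures.
From mathcomp Require Import all_boot all_order all_algebra.
From mathcomp Require Import all_classical all_reals all_analysis.
From mathcomp Require Import ess_sup_inf.
Set Implicit Arguments.
Unset Strict Implicit.
Unset Printing Implicit Defensive.

Import Order.TTheory GRing.Theory Num.Def Num.Theory.
Import numFieldNormedType.Exports.

Local Open Scope classical_set_scope.
Local Open Scope ring_scope.

Section Defs.
Variable R : realType.

Definition vnorm (k : nat) (v : 'rV[R]_k) : R :=
  Num.sqrt (\sum_(i < k) (v ord0 i) ^+ 2).

Definition clamp (theta s : R) : R := Num.min 0 (Num.max (- theta) s).

(* Elements of X^k = C([-theta,0], R^k) are represented by functions
   R -> R^k that are continuous on [-theta,0] and normalized by
   xi = xi o clamp (so they are determined by their values on [-theta,0]). *)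
Definition isX (theta : R) (k : nat) (xi : R -> 'rV[R]_k) : Prop :=
  {within `[- theta, 0], continuous xi} /\ (forall s, xi s = xi (clamp theta s)).

Definition normX (theta : R) (k : nat) (xi : R -> 'rV[R]_k) : R :=
  sup [set vnorm (xi s) | s in `[- theta, 0]].

Definition seg (theta : R) (k : nat) (v : R -> 'rV[R]_k) (t : R) : R -> 'rV[R]_k :=
  fun s => v (t + clamp theta s).

Definition classN (sigma : R -> R) : Prop :=
  {within [set s | 0 <= s], continuous sigma} /\
  (forall s, 0 <= s -> 0 <= sigma s) /\
  (forall a b, 0 <= a -> a <= b -> sigma a <= sigma b) /\
  sigma 0 = 0.

Definition classK (sigma : R -> R) : Prop :=
  classN sigma /\ (forall a b, 0 <= a -> a < b -> sigma a < sigma b).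

Definition classKL (beta : R -> R -> R) : Prop :=
  (forall t, 0 <= t -> classK (fun s => beta s t)) /\
  (forall s, 0 <= s -> forall a b, 0 <= a -> a <= b -> beta s b <= beta s a) /\
  (forall s, 0 <= s -> beta s t @[t --> +oo] --> 0).

Definition inM (m : nat) (u : R -> 'rV[R]_m) : Prop :=
  (forall j : 'I_m, measurable_fun (`[0, +oo[%classic : set R) (fun t => u t ord0 j)) /\
  (forall T, 0 <= T -> exists M : R,
     {ae (@lebesgue_measure R), forall t, 0 <= t <= T -> vnorm (u t) <= M}).

Definition normM (m : nat) (u : R -> 'rV[R]_m) : \bar R :=
  ess_sup (@lebesgue_measure R)
    (fun t => (if 0 <= t then vnorm (u t) else 0)%:E).

Definition loc_lipschitz (theta : R) (n m : nat)
    (f : (R -> 'rV[R]_n) -> 'rV[R]_m -> 'rV[R]_n) : Prop :=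
  forall xi0 v0, isX theta xi0 ->
  exists r : R, exists L : R, 0 < r /\
    forall xi1 xi2 v1 v2, isX theta xi1 -> isX theta xi2 ->
      normX theta (fun s => xi1 s - xi0 s) < r ->
      normX theta (fun s => xi2 s - xi0 s) < r ->
      vnorm (v1 - v0) < r -> vnorm (v2 - v0) < r ->
      vnorm (f xi1 v1 - f xi2 v2) <=
        L * (normX theta (fun s => xi1 s - xi2 s) + vnorm (v1 - v2)).

Definition bounded_on_bounded (theta : R) (n m : nat)
    (f : (R -> 'rV[R]_n) -> 'rV[R]_m -> 'rV[R]_n) : Prop :=
  forall B : R, exists C : R, forall xi v, isX theta xi ->
    normX theta xi <= B -> vnorm v <= B -> vnorm (f xi v) <= C.

Definition Icc0 (t : R) : set R := `[0, t]%classic.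

(* x is a solution on [-theta, +oo) of x'(t) = f(x_t, u(t)), x = xi on
   [-theta,0] (Caratheodory sense: integral equation). *)
Definition isSol (theta : R) (n m : nat)
    (f : (R -> 'rV[R]_n) -> 'rV[R]_m -> 'rV[R]_n)
    (xi : R -> 'rV[R]_n) (u : R -> 'rV[R]_m) (x : R -> 'rV[R]_n) : Prop :=
  {within `[- theta, +oo[, continuous x} /\
  (forall s, - theta <= s <= 0 -> x s = xi s) /\
  (forall t, 0 <= t -> forall i : 'I_n,
     (@lebesgue_measure R).-integrable (`[0, t]%classic : set R)
        (fun s => (f (seg theta x s) (u s) ord0 i)%:E) /\
     (x t ord0 i)%:E = (xi 0 ord0 i)%:E +
        (\int[@lebesgue_measure R]_(s in Icc0 t)
            (f (seg theta x s) (u s) ord0 i)%:E)%E).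

End Defs.

(* Main.v *)
Require Import Defs.
From HB Require Import structures.
From mathcomp Require Import all_boot all_order all_algebra.
From mathcomp Require Import all_classical all_reals all_analysis.
From mathcomp Require Import ess_sup_inf.
From mathcomp Require Import lra.
Import Order.TTheory GRing.Theory Num.Def Num.Theory.
Import numFieldNormedType.Exports.
Local Open Scope classical_set_scope.
Local Open Scope ring_scope.

Lemma vnorm_cont (R : realType) k : continuous (@vnorm R k).
Proof.
have Hs : forall s : seq 'I_k, continuous (fun v : 'rV[R]_k => \big[+%R/0]_(i <- s) (v ord0 i) ^+ 2).
  elim=> [|i s IH].
    have -> : (fun v : 'rV[R]_k => \big[+%R/0]_(i <- [::]) (v ord0 i) ^+ 2) = (fun _ => 0).
      by apply: boolp.funext => w; rewrite big_nil.
    exact: cst_continuous.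
  have -> : (fun v : 'rV[R]_k => \big[+%R/0]_(j <- i :: s) (v ord0 j) ^+ 2) =
     (fun v => v ord0 i * v ord0 i + \big[+%R/0]_(j <- s) (v ord0 j) ^+ 2).
    by apply: boolp.funext => w; rewrite big_cons expr2.
  move=> w.
  have H1 := @continuousM _ _ (fun v : 'rV[R]_k => v ord0 i) (fun v => v ord0 i) w (@coord_continuous R _ _ ord0 i w) (@coord_continuous R _ _ ord0 i w).
  exact: (@continuousD _ _ _ (fun v : 'rV[R]_k => v ord0 i * v ord0 i) (fun v => \big[+%R/0]_(j <- s) (v ord0 j) ^+ 2) w H1 (IH w)).
move=> v; rewrite /vnorm.
exact: (@continuous_comp _ _ _ (fun v : 'rV[R]_k => \sum_(i < k) (v ord0 i) ^+ 2) (@Num.sqrt R) v (Hs _ v) (@sqrt_continuous R _)).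
Qed.
Lemma bnd_img (R : realType) (F : R -> R) a b : a <= b ->
  {within `[a, b], continuous F} -> has_ubound [set F x | x in `[a, b]].
Proof.
move=> ab /(EVT_max ab) [c _ Hc]; exists (F c) => _ [x xin <-].
exact: Hc.
Qed.

Lemma vnorm_ge0 (R : realType) k (v : 'rV[R]_k) : 0 <= vnorm v.
Proof. exact: sqrtr_ge0. Qed.
Lemma KL_shift (R : realType) (beta : R -> R -> R) (theta : R) : 0 < theta ->
  classKL beta ->
  classKL (fun s t => beta s (Num.max 0 (t - theta)) + (if t < theta then s else 0)).
Proof.
move=> th0 [K1 [K2 K3]].
have mx0 : forall t, 0 <= Num.max 0 (t - theta) by move=> t; rewrite le_max lexx.
split; [|split].
- move=> t t0.
  have [[Cc [Cn [Cm C0]]] Cs] := K1 _ (mx0 t).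
  case: (boolP (t < theta)) => _.
  + split; [split; [|split; [|split]]|].
    * move=> x.
      have Hid : {within [set s : R | 0 <= s], continuous (fun s : R => s)}.
        by apply: continuous_subspaceT => y; exact: cvg_id.
      have := continuousD (Cc x) (Hid x); exact.
    * by move=> s s0; rewrite addr_ge0 // Cn.
    * by move=> a b a0 ab; rewrite lerD // Cm.
    * by rewrite C0 addr0.
    * by move=> a b a0 ab; rewrite ltr_leD // ?Cs // ltW.
  + split; [split; [|split; [|split]]|].
    * move=> x.
      have Hid : {within [set s : R | 0 <= s], continuous (fun s : R => 0 : R)}.
        by apply: continuous_subspaceT => y; exact: cst_continuous.
      have := continuousD (Cc x) (Hid x); exact.
    * by move=> s s0; rewrite addr0 Cn.
    * by move=> a b a0 ab; rewrite !addr0 Cm.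
    * by rewrite C0 addr0.
    * by move=> a b a0 ab; rewrite !addr0 Cs.
- move=> s s0 a b a0 ab; apply: lerD.
    apply: K2 => //; rewrite ge_max le_max lexx le_max /=.
    by rewrite lerB // orbT.
  case: ifP => hb; case: ifP => ha; rewrite ?lexx //.
  by rewrite (le_lt_trans ab hb) in ha.
- move=> s s0; rewrite -[0]addr0.
  apply: cvgD.
  + have := K3 _ s0; apply: cvg_comp.
    apply/cvgryPge => A; near=> t.
    rewrite le_max; apply/orP; right.
    rewrite lerBrDr; near: t; apply: nbhs_pinfty_ge; exact: num_real.
  + apply: cvg_near_cst; near=> t.
    rewrite ifF ?addr0 //.
    apply/negbTE; rewrite -leNgt; near: t; apply: nbhs_pinfty_ge; exact: num_real.
Unshelve. all: by end_near.
Qed.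

Lemma clampid (R : realType) (theta s : R) : - theta <= s <= 0 -> clamp theta s = s.
Proof.
move=> /andP[h1 h2]; rewrite /clamp (max_idPr h1); exact/min_idPr.
Qed.

Theorem lemma7p1 (R : realType) (theta : R) (n m p : nat)
  (f : (R -> 'rV[R]_n) -> 'rV[R]_m -> 'rV[R]_n)
  (h0 : 'rV[R]_n -> 'rV[R]_p)
  (phi : (R -> 'rV[R]_n) -> (R -> 'rV[R]_m) -> R -> 'rV[R]_n)
  (alpha : (R -> 'rV[R]_n) -> R)
  (beta : R -> R -> R) (rho kappa gamma : R -> R) :
  0 < theta ->
  loc_lipschitz theta f ->
  bounded_on_bounded theta f ->
  continuous h0 -> h0 0 = 0 ->
  (* forward completeness: phi xi u is the (global) solution *)
  (forall xi u, isX theta xi -> inM u -> isSol theta f xi u (phi xi u)) ->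
  (* alpha : X^n -> R_{>=0} continuous, alpha(0) = 0 *)
  (forall xi, isX theta xi -> 0 <= alpha xi) ->
  (forall xi0, isX theta xi0 -> forall e : R, 0 < e -> exists d : R, 0 < d /\
     forall xi, isX theta xi -> normX theta (fun s => xi s - xi0 s) < d ->
       `|alpha xi - alpha xi0| < e) ->
  alpha (fun _ => 0) = 0 ->
  classKL beta -> classN rho -> classN kappa -> classN gamma ->
  (forall xi u, isX theta xi -> inM u -> (normM u < +oo)%E ->
     forall t, 0 <= t ->
     vnorm (h0 (phi xi u t)) <=
       Num.max (beta (alpha xi) (t / (1 + rho (normX theta xi))))
        (Num.max (kappa (sup [set vnorm (h0 (phi xi u tau)) | tau in `[- theta, t]]))
                 (gamma (fine (normM u))))) ->
  exists beta1 : R -> R -> R, classKL beta1 /\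
  (forall xi u, isX theta xi -> inM u -> (normM u < +oo)%E ->
     forall t, 0 <= t ->
     normX theta (seg theta (fun tau => h0 (phi xi u tau)) t) <=
       Num.max (beta1 (Num.max (alpha xi) (normX theta (fun s => h0 (xi s))))
                      (t / (1 + rho (normX theta xi))))
        (Num.max (kappa (sup [set normX theta (seg theta (fun r => h0 (phi xi u r)) tau)
                              | tau in `[0, t]]))
                 (gamma (fine (normM u))))).
Proof.
move=> th0 _ _ h0c h00 Hsol Hal _ _ HKL Hrho Hkap Hgam Hy.
exists (fun s t => beta s (Num.max 0 (t - theta)) + (if t < theta then s else 0)).
split; first exact: KL_shift.
move=> xi u Hxi Hu Hfin t t0.
have [Hxc Hxn] := Hxi.
have [Xc [Xeq _]] := Hsol xi u Hxi Hu.
have gc : continuous (fun v : 'rV[R]_n => vnorm (h0 v)).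
  by move=> v; exact: (continuous_comp (h0c v) (@vnorm_cont R p (h0 v))).
pose y := fun tau => vnorm (h0 (phi xi u tau)).
have Fc : forall b, - theta <= b -> {within `[- theta, b], continuous y}.
  move=> b hb.
  have := @within_continuous_comp _ _ _ `[- theta, b] (phi xi u) (fun v => vnorm (h0 v)) (fun v _ => gc v).
  apply; apply: continuous_subspaceW Xc.
  by move=> z; rewrite /= !in_itv /= => /andP[-> _].
have tht : - theta <= t by lra.
have Hb := @bnd_img _ _ _ _ tht (Fc t tht).
pose M := sup [set y v | v in `[- theta, t]].
have yM : forall v, - theta <= v <= t -> y v <= M.
  move=> v hv; apply: (ub_le_sup Hb); exists v => //=.
have y0 : forall v, 0 <= y v by move=> v; exact: vnorm_ge0.
pose F := fun r => h0 (phi xi u r).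
have segle : forall tau, 0 <= tau <= t -> forall s, - theta <= s <= 0 ->
    y (tau + s) <= normX theta (seg theta F tau) /\ normX theta (seg theta F tau) <= M.
  move=> tau /andP[ta1 ta2] s hs; split.
    apply: ub_le_sup.
      exists M => _ [s' hs' <-]; rewrite /seg /F clampid; last first.
        by move: hs'; rewrite /= in_itv.
      apply: yM; move: hs'; rewrite /= in_itv /= => /andP[h1 h2].
      apply/andP; split; lra.
    by exists s; [rewrite /= in_itv | rewrite /seg /F clampid].
  apply: ge_sup.
    exists (y (tau + clamp theta 0)); exists 0 => //.
    by rewrite /= in_itv /= lexx andbT oppr_le0 ltW.
  move=> _ [s' hs' <-]; rewrite /seg /F clampid; last first.
    by move: hs'; rewrite /= in_itv.
  apply: yM; move: hs'; rewrite /= in_itv /= => /andP[h1 h2].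
  apply/andP; split; lra.
pose S := sup [set normX theta (seg theta F tau) | tau in `[0, t]].
have HS : has_ubound [set normX theta (seg theta F tau) | tau in `[0, t]].
  exists M => _ [tau htau <-].
  move: htau; rewrite /= in_itv /= => htau.
  by have [_ h] := segle tau htau 0 (ltac:(rewrite lexx andbT oppr_le0 ltW //)).
have yS : forall v, - theta <= v <= t -> y v <= S.
  move=> v /andP[v1 v2].
  have [v0|v0] := leP 0 v.
    have [h _] := segle v (ltac:(apply/andP; split => //)) 0 (ltac:(rewrite lexx andbT oppr_le0 ltW //)).
    rewrite addr0 in h; apply: (le_trans h); apply: (ub_le_sup HS).
    by exists v => //; rewrite /= in_itv /= v0.
  have [h _] := segle 0 (ltac:(apply/andP; split => //)) v (ltac:(apply/andP; split => //; exact: ltW)).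
  rewrite add0r in h; apply: (le_trans h); apply: (ub_le_sup HS).
  by exists 0 => //; rewrite /= in_itv /= lexx.
have supS : forall tau, 0 <= tau <= t -> sup [set y v | v in `[- theta, tau]] <= S.
  move=> tau /andP[ta1 ta2]; apply: ge_sup.
    exists (y tau); exists tau => //; rewrite /= in_itv /= lexx andbT; lra.
  move=> _ [v hv <-]; apply: yS; move: hv; rewrite /= in_itv /= => /andP[h1 h2].
  apply/andP; split; lra.
have supge0 : forall tau, 0 <= tau <= t -> 0 <= sup [set y v | v in `[- theta, tau]].
  move=> tau /andP[ta1 ta2]; apply: (le_trans (y0 tau)); apply: ub_le_sup.
    exists M => _ [v hv <-]; apply: yM; move: hv; rewrite /= in_itv /= => /andP[h1 h2].
    apply/andP; split; lra.
  exists tau => //; rewrite /= in_itv /= lexx andbT; lra.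
have th0' : - theta <= 0 by rewrite oppr_le0 ltW.
have Hnx : forall s, - theta <= s <= 0 -> vnorm (h0 (xi s)) <= normX theta (fun s => h0 (xi s)).
  move=> s hs; apply: ub_le_sup; last by exists s => //; rewrite /= in_itv.
  apply: (@bnd_img _ _ _ _ th0').
  have := @within_continuous_comp _ _ _ `[- theta, 0] xi (fun v => vnorm (h0 v)) (fun v _ => gc v).
  exact.
have nxi0 : 0 <= normX theta xi.
  apply: (le_trans (@vnorm_ge0 _ _ (xi 0))); apply: ub_le_sup.
    apply: (@bnd_img _ _ _ _ th0').
    have := @within_continuous_comp _ _ _ `[- theta, 0] xi (fun v => vnorm v) (fun v _ => @vnorm_cont _ _ v).
    exact.
  by exists 0 => //; rewrite /= in_itv /= lexx andbT.
have [_ [rho0 _]] := Hrho.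
have [_ [kap0 [kapm _]]] := Hkap.
set c := 1 + rho (normX theta xi).
have c1 : 1 <= c by rewrite /c lerDl rho0.
have c0 : 0 < c by apply: (lt_le_trans ltr01 c1).
set r := Num.max (alpha xi) (normX theta (fun s => h0 (xi s))).
have al0 := Hal xi Hxi.
have alr : alpha xi <= r by rewrite /r le_max lexx.
have r0 : 0 <= r by apply: (le_trans al0).
have [KL1 [KL2 _]] := HKL.
have bge0 : forall tt, 0 <= tt -> 0 <= beta r tt.
  by move=> tt tt0; have [[_ [Hn _]] _] := KL1 tt tt0; exact: Hn.
rewrite {1}/normX; apply: ge_sup.
  exists (vnorm (seg theta (fun tau => h0 (phi xi u tau)) t 0)); exists 0 => //.
  by rewrite /= in_itv /= lexx andbT.
move=> _ [s hs <-]; move: hs; rewrite /= in_itv /= => /andP[hs1 hs2].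
rewrite /seg clampid ?hs1 ?hs2 //.
have [hts|hts] := leP 0 (t + s).
  apply: (le_trans (Hy xi u Hxi Hu Hfin (t + s) hts)).
  rewrite ge_max; apply/andP; split.
    rewrite le_max; apply/orP; left.
    have tc0 : 0 <= (t + s) / c by rewrite divr_ge0 // ltW.
    apply: (@le_trans _ _ (beta r ((t + s) / c))).
      by have [[_ [_ [Hm _]]] _] := KL1 _ tc0; exact: Hm.
    apply: (@le_trans _ _ (beta r (Num.max 0 (t / c - theta)))); last first.
      by rewrite /=; apply: ler_wpDr; [case: (t / c < theta) | exact: lexx].
    apply: KL2 => //; first by rewrite le_max lexx.
    rewrite ge_max tc0 /=.
    have : - theta <= s / c by rewrite ler_pdivlMr //; nra.
    rewrite mulrDl; lra.
  rewrite ge_max; apply/andP; split.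
    rewrite le_max; apply/orP; right; rewrite le_max; apply/orP; left.
    apply: kapm; first by apply: (supge0 (t + s)); apply/andP; split; lra.
    by apply: (supS (t + s)); apply/andP; split; lra.
  by rewrite le_max; apply/orP; right; rewrite le_max lexx orbT.
rewrite le_max; apply/orP; left.
have tsr : - theta <= t + s <= 0 by apply/andP; split; lra.
rewrite Xeq //.
apply: (le_trans (Hnx _ tsr)); apply: (@le_trans _ _ r); first by rewrite /r le_max lexx orbT.
have Tth : t / c < theta.
  have : t / c <= t by rewrite ler_pdivrMr //; nra.
  lra.
rewrite Tth; apply: ler_wpDl => //; apply: bge0; by rewrite le_max lexx.
Qed.
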